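(* For every $l\in L$ and $x_0\in\{x,y\}$: $\partial^A_{x_0}(l)=\operatorname{ad}_{\partial^L_{x_0}(l)}(1\otimes1)$.
   Context: $A=\mathbb{R}\langle x,y\rangle$; $L\subset A$ the free Lie algebra on $x,y$. $\partial^A_{x_0}:A\to A\otimes A$ is given on monomials by $a_1\cdots a_n\mapsto\sum_{i:\,a_i=x_0}a_1\cdots a_{i-1}\otimes a_{i+1}\cdots a_n$; write $\partial^A_{x_0}(l)=\sum\partial^1\otimes\partial^2$, and $\partial^L_{x_0}(l)=\sum\partial^1\epsilon(\partial^2)\in A$ where $\epsilon:A\to\mathbb{R}$ is the constant-term algebra homomorphism. $A\otimes A$ is an $A$-bimodule via $a(b\otimes c)d=ab\otimes cd$. For $a\in A$, $\operatorname{ad}_a:A\otimes A\to A\otimes A$ is defined linearly in $a$ by $\operatorname{ad}_1=\mathrm{id}$ and $\operatorname{ad}_{za}(m)=z\,\operatorname{ad}_a(m)-\operatorname{ad}_a(m)\,z$ for $z\in\{x,y\}$ and monomials $a$. *)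

(* Defs.v *)
From HB Require Import structures.
From mathcomp Require Import all_boot all_order all_algebra.
From mathcomp Require Import Rstruct.
From Stdlib Require Import Reals.
Set Implicit Arguments. Unset Strict Implicit. Unset Printing Implicit Defensive.
Import GRing.Theory.
Local Open Scope ring_scope.

(* Letters: true = x, false = y.  Words = monomials of A = R<x,y>. *)
Definition word := seq bool.

(* Elements of A are given by their coefficient functions on words. *)
Definition A := word -> R.
(* Elements of A ⊗ A are given by their coefficients on u ⊗ v. *)
Definition AA := word -> word -> R.

Definition letter (b : bool) : A := fun w => if w == [:: b] then 1 else 0.
Definition Ax : A := letter true.
Definition Ay : A := letter false.

Definition addA (f g : A) : A := fun w => f w + g w.
Definition scaleA (c : R) (f : A) : A := fun w => c * f w.
Definition mulA (f g : A) : A :=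
  fun w => \sum_(i < (size w).+1) f (take i w) * g (drop i w).
Definition bracket (f g : A) : A := fun w => mulA f g w - mulA g f w.

Inductive inL : A -> Prop :=
  | inL_x : inL Ax
  | inL_y : inL Ay
  | inL_add f g : inL f -> inL g -> inL (addA f g)
  | inL_scale c f : inL f -> inL (scaleA c f)
  | inL_br f g : inL f -> inL g -> inL (bracket f g).

Definition epsA (f : A) : R := f [::].

Definition dA (x0 : bool) (f : A) : AA := fun u v => f (u ++ x0 :: v).

(* ∂^L_{x0}(l) = Σ ∂^1 ε(∂^2), i.e. (id ⊗ ε) ∂^A_{x0}(l) *)
Definition dL (x0 : bool) (f : A) : A := fun u => epsA (dA x0 f u).

Definition oneone : AA := fun u v => ((u == [::]) && (v == [::]))%:R.

(* left / right multiplication by a letter on A ⊗ A:  z (b⊗c) = zb ⊗ c,  (b⊗c) z = b ⊗ cz *)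
Definition lmulT (z : bool) (m : AA) : AA :=
  fun u v => if u is z' :: u' then (z' == z)%:R * m u' v else 0.
Definition rmulT (z : bool) (m : AA) : AA :=
  fun u v => if rev v is z' :: rv then (z' == z)%:R * m u (rev rv) else 0.

Fixpoint adw (w : word) (m : AA) : AA :=
  match w with
  | [::] => m
  | z :: w' => fun u v => lmulT z (adw w' m) u v - rmulT z (adw w' m) u v
  end.

(* ad_a extended linearly in a.  The coefficient at u ⊗ v of ad_w m vanishes
   when size w > size u + size v (each letter of w lands in u or in v), so the
   linear extension is the finite sum below. *)
Definition adA (a : A) (m : AA) : AA :=
  fun u v => \sum_(k < (size u + size v).+1) \sum_(t : k.-tuple bool)
               a (tval t) * adw (tval t) m u v.

(* Main.v *)
From Pilot Require Import Defs.
From HB Require Import structures.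
From mathcomp Require Import all_boot all_order all_algebra.
From mathcomp Require Import Rstruct.
From Stdlib Require Import Reals.
From mathcomp Require Import ring.
From Stdlib Require Import FunctionalExtensionality.
Import Pilot.Defs.
Set Implicit Arguments. Unset Strict Implicit. Unset Printing Implicit Defensive.
Import GRing.Theory.
Local Open Scope ring_scope.

Definition der (z : bool) (a : A) : A := fun w => a (z :: w).
Definition rder (z : bool) (a : A) : A := fun w => a (rcons w z).
Definition delta : A := fun w => (w == [::])%:R.

Lemma mulA_nil f g : mulA f g [::] = f [::] * g [::].
Proof. by rewrite /mulA big_ord1. Qed.

Lemma mulA_cons f g z w :
  mulA f g (z :: w) = mulA (der z f) g w + f [::] * g (z :: w).
Proof.
rewrite /mulA big_ord_recl /= addrC; congr (_ + _).
Qed.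

Lemma mulA_linl h f g c1 c2 k w :
  (forall w, h w = c1 * f w + c2 * g w) ->
  mulA h k w = c1 * mulA f k w + c2 * mulA g k w.
Proof.
move=> H; rewrite /mulA !mulr_sumr -big_split /=; apply: eq_bigr => i _.
rewrite H; ring.
Qed.

Lemma mulA_linr h f g c1 c2 k w :
  (forall w, h w = c1 * f w + c2 * g w) ->
  mulA k h w = c1 * mulA k f w + c2 * mulA k g w.
Proof.
move=> H; rewrite /mulA !mulr_sumr -big_split /=; apply: eq_bigr => i _.
rewrite H; ring.
Qed.

Lemma mulA_rcons f g z w :
  mulA f g (rcons w z) = mulA f (rder z g) w + f (rcons w z) * g [::].
Proof.
elim: w f => [|z' w IH] f.
  rewrite /= mulA_cons !mulA_nil /rder /der /=; ring.
rewrite rcons_cons mulA_cons IH mulA_cons /rder /der /=; ring.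
Qed.

Lemma mulA_assoc f g h w : mulA f (mulA g h) w = mulA (mulA f g) h w.
Proof.
elim: w f g => [|z w IH] f g; first by rewrite !mulA_nil mulrA.
rewrite !mulA_cons IH.
rewrite (@mulA_linl (der z (mulA f g)) (mulA (der z f) g) (der z g) 1 (f [::])); last first.
  by move=> w'; rewrite /der mulA_cons mul1r.
rewrite mulA_nil; ring.
Qed.

Lemma mulA_deltal g w : mulA delta g w = g w.
Proof.
case: w => [|z w]; first by rewrite mulA_nil /delta /= mul1r.
rewrite mulA_cons (@mulA_linl (der z delta) delta delta 0 0); last first.
  by move=> w'; rewrite /der /delta /= mul0r addr0.
by rewrite /delta /= !mul0r !add0r mul1r.
Qed.

Lemma mulA_deltar g w : mulA g delta w = g w.
Proof.
elim: w g => [|z w IH] g; first by rewrite mulA_nil /delta /= mulr1.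
by rewrite mulA_cons IH /delta /= mulr0 addr0.
Qed.

Lemma der_letter z z' w : der z' (letter z) w = (z' == z)%:R * delta w + 0 * delta w.
Proof.
rewrite /der /letter /delta.
by case: z z' => [] []; case: w => [|a w] /=; rewrite ?mul1r ?mul0r ?addr0.
Qed.

Lemma rder_letter z z' w : rder z' (letter z) w = (z' == z)%:R * delta w + 0 * delta w.
Proof.
rewrite /rder /letter /delta.
by case: z z' => [] []; case: w => [|a [|b w]] /=; rewrite ?eqseq_cons /= ?andbF ?mul1r ?mul0r ?addr0.
Qed.

Lemma mulA_letter_l g z u :
  mulA (letter z) g u = if u is z' :: u' then (z' == z)%:R * g u' else 0.
Proof.
case: u => [|z' u]; first by rewrite mulA_nil /letter /= mul0r.
rewrite mulA_cons (mulA_linl _ _ (der_letter z z')) mulA_deltal.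
by rewrite /letter /= !mul0r !addr0.
Qed.

Lemma mulA_letter_r g z v :
  mulA g (letter z) v = if rev v is z' :: rv then (z' == z)%:R * g (rev rv) else 0.
Proof.
case/lastP: v => [|v z']; first by rewrite mulA_nil /letter /= mulr0.
rewrite rev_rcons revK mulA_rcons (mulA_linr _ _ (rder_letter z z')) mulA_deltar.
by rewrite /letter /= !mul0r !mulr0 !addr0.
Qed.

Fixpoint adn (n : nat) (a : A) (m : AA) (u v : word) {struct n} :=
  a [::] * m u v + match n with 0 => 0 | n'.+1 =>
     (if u is z :: u' then adn n' (der z a) m u' v else 0) -
     (if rev v is z :: rv then adn n' (der z a) m u (rev rv) else 0) end.

Definition ad' (a : A) (m : AA) (u v : word) := adn (size u + size v) a m u v.

Lemma ad'E a m u v : ad' a m u v = a [::] * m u v +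
  ((if u is z :: u' then ad' (der z a) m u' v else 0) -
   (if rev v is z :: rv then ad' (der z a) m u (rev rv) else 0)).
Proof.
case: u => [|z u]; case/lastP: v => [|v z'].
- by rewrite /ad' /= subr0.
- by rewrite /ad' /= size_rcons addnS /= !rev_rcons revK.
- by rewrite /ad' /= addn0 subr0.
- by rewrite /ad' /= size_rcons addnS /= !rev_rcons revK.
Qed.

Lemma size0 (u v : word) : (size u + size v <= 0)%nat -> u = [::] /\ v = [::].
Proof. by case: u; case: v. Qed.

Lemma ad'_lin m : forall n u v, (size u + size v <= n)%nat -> forall h f g c1 c2,
  (forall w, h w = c1 * f w + c2 * g w) ->
  ad' h m u v = c1 * ad' f m u v + c2 * ad' g m u v.
Proof.
elim=> [|n IH] u v Hs h f g c1 c2 H.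
  case: (size0 Hs) => -> ->; rewrite !ad'E H /=; ring.
have Hd z w : der z h w = c1 * der z f w + c2 * der z g w by exact: H.
rewrite !(ad'E h) !(ad'E f) !(ad'E g) H.
case: u Hs => [|z u] Hs; case/lastP: v Hs => [|v z'] Hs;
  rewrite ?rev_rcons ?revK /=;
  rewrite ?(IH u (rcons v z') _ _ _ _ _ _ (Hd z)) ?(IH (z :: u) v _ _ _ _ _ _ (Hd z'))
          ?(IH [::] v _ _ _ _ _ _ (Hd z')) ?(IH u [::] _ _ _ _ _ _ (Hd z)); try ring.
all: move: Hs; rewrite /= ?size_rcons ?addnS ?addSn //.
Qed.

Lemma ad'_linE m u v h f g c1 c2 :
  (forall w, h w = c1 * f w + c2 * g w) ->
  ad' h m u v = c1 * ad' f m u v + c2 * ad' g m u v.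
Proof. exact: (@ad'_lin m _ u v (leqnn _) h f g c1 c2). Qed.

Lemma ad'_delta m u v : ad' delta m u v = m u v.
Proof.
rewrite ad'E.
have H z w : der z delta w = 0 * delta w + 0 * delta w.
  by rewrite /der /delta /= !mul0r addr0.
case: u => [|z u]; case/lastP: v => [|v z'];
  rewrite ?rev_rcons ?revK ?(ad'_linE _ _ _ (H _)) /delta /=; ring.
Qed.

Lemma ad'_mul m : forall n u v, (size u + size v <= n)%nat -> forall a b,
  ad' (mulA a b) m u v = ad' a (ad' b m) u v.
Proof.
elim=> [|n IH] u v Hs a b.
  case: (size0 Hs) => -> ->.
  by rewrite ad'E [in RHS]ad'E [ad' b m [::] [::]]ad'E mulA_nil /=; ring.
have Hd z w : der z (mulA a b) w = 1 * mulA (der z a) b w + a [::] * der z b w.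
  by rewrite /der mulA_cons mul1r.
rewrite ad'E [in RHS]ad'E [ad' b m u v]ad'E mulA_nil.
case: u Hs => [|z u] Hs; case/lastP: v Hs => [|v z'] Hs; rewrite ?rev_rcons ?revK /=;
  rewrite ?(ad'_linE _ _ _ (Hd _)) ?IH; try ring.
all: move: Hs; rewrite /= ?size_rcons ?addnS ?addSn //.
Qed.

Lemma ad'_mulE m a b u v : ad' (mulA a b) m u v = ad' a (ad' b m) u v.
Proof. exact: (@ad'_mul m _ u v (leqnn _)). Qed.

Definition Lm (f : A) (m : AA) : AA := fun u v => mulA f (fun u2 => m u2 v) u.
Definition Rm (f : A) (m : AA) : AA := fun u v => mulA (m u) f v.

Lemma Lm_linf h f g c1 c2 m u v : (forall w, h w = c1 * f w + c2 * g w) ->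
  Lm h m u v = c1 * Lm f m u v + c2 * Lm g m u v.
Proof. exact: mulA_linl. Qed.

Lemma Rm_linf h f g c1 c2 m u v : (forall w, h w = c1 * f w + c2 * g w) ->
  Rm h m u v = c1 * Rm f m u v + c2 * Rm g m u v.
Proof. exact: mulA_linr. Qed.

Lemma Lm_linm f (M M1 M2 : AA) c1 c2 u v :
  (forall u v, M u v = c1 * M1 u v + c2 * M2 u v) ->
  Lm f M u v = c1 * Lm f M1 u v + c2 * Lm f M2 u v.
Proof. move=> H; apply: mulA_linr => w; exact: H. Qed.

Lemma Rm_linm f (M M1 M2 : AA) c1 c2 u v :
  (forall u v, M u v = c1 * M1 u v + c2 * M2 u v) ->
  Rm f M u v = c1 * Rm f M1 u v + c2 * Rm f M2 u v.
Proof. move=> H; apply: mulA_linl => w; exact: H. Qed.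

Lemma LL g h m u v : Lm g (Lm h m) u v = Lm (mulA g h) m u v.
Proof. exact: mulA_assoc. Qed.

Lemma RR g h m u v : Rm g (Rm h m) u v = Rm (mulA h g) m u v.
Proof. rewrite /Rm; symmetry; exact: mulA_assoc. Qed.

Lemma LR g h m u v : Lm g (Rm h m) u v = Rm h (Lm g m) u v.
Proof.
rewrite /Lm /Rm /mulA.
under eq_bigr do rewrite mulr_sumr.
rewrite exchange_big; apply: eq_bigr => j _.
rewrite mulr_suml; apply: eq_bigr => i _; ring.
Qed.

Lemma ad'_letter z m u v : ad' (letter z) m u v =
  (if u is z' :: u' then (z' == z)%:R * m u' v else 0) -
  (if rev v is z' :: rv then (z' == z)%:R * m u (rev rv) else 0).
Proof.
rewrite ad'E /letter /= mul0r add0r.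
case: u => [|z1 u]; case/lastP: v => [|v z2]; rewrite ?rev_rcons ?revK /=;
  rewrite ?(ad'_linE _ _ _ (der_letter _ _)) ?ad'_delta; ring.
Qed.

Lemma ad'_Lie l : inL l -> forall m u v, ad' l m u v = Lm l m u v - Rm l m u v.
Proof.
have Hlet z m u v : ad' (letter z) m u v = Lm (letter z) m u v - Rm (letter z) m u v.
  by rewrite ad'_letter /Lm /Rm mulA_letter_l mulA_letter_r.
elim=> [| | f g _ IHf _ IHg | c f _ IHf | g h _ IHg _ IHh] m u v.
- exact: (Hlet true m u v).
- exact: (Hlet false m u v).
- have Ha w : addA f g w = 1 * f w + 1 * g w by rewrite /addA !mul1r.
  rewrite (ad'_linE _ _ _ Ha) (Lm_linf _ _ _ Ha) (Rm_linf _ _ _ Ha) IHf IHg.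
  ring.
- have Ha w : scaleA c f w = c * f w + 0 * f w by rewrite /scaleA mul0r addr0.
  rewrite (ad'_linE _ _ _ Ha) (Lm_linf _ _ _ Ha) (Rm_linf _ _ _ Ha) IHf.
  ring.
- have Hb w : bracket g h w = 1 * mulA g h w + (-1) * mulA h g w.
    by rewrite /bracket; ring.
  rewrite (ad'_linE _ _ _ Hb) !ad'_mulE IHg IHh.
  have Eh u' v' : ad' h m u' v' = 1 * Lm h m u' v' + (-1) * Rm h m u' v'.
    by rewrite IHh; ring.
  have Eg u' v' : ad' g m u' v' = 1 * Lm g m u' v' + (-1) * Rm g m u' v'.
    by rewrite IHg; ring.
  rewrite (Lm_linm _ _ _ Eh) (Rm_linm _ _ _ Eh) (Lm_linm _ _ _ Eg) (Rm_linm _ _ _ Eg).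
  rewrite (Lm_linf _ _ _ Hb) (Rm_linf _ _ _ Hb) !LL !RR !LR.
  ring.
Qed.
Lemma inL_eps l : inL l -> l [::] = 0.
Proof.
elim=> [| | f g _ Hf _ Hg | c f _ Hf | f g _ Hf _ Hg] //.
- by rewrite /addA Hf Hg addr0.
- by rewrite /scaleA Hf mulr0.
- by rewrite /bracket !mulA_nil Hf Hg mul0r subrr.
Qed.

Lemma dA_mul x0 f g u v : dA x0 (mulA f g) u v = Lm f (dA x0 g) u v + Rm g (dA x0 f) u v.
Proof.
elim: u f => [|z u IH] f.
  by rewrite /dA /Lm /Rm /= mulA_cons mulA_nil addrC.
have := IH (der z f); rewrite /dA /Lm /Rm /= => {}IH.
rewrite mulA_cons IH mulA_cons.
rewrite /der /=. ring.
Qed.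

Lemma main_pw x0 l : inL l -> forall u v, dA x0 l u v = ad' (dL x0 l) oneone u v.
Proof.
have Hlet z u v : dA x0 (letter z) u v = ad' (dL x0 (letter z)) oneone u v.
  have H w : dL x0 (letter z) w = (x0 == z)%:R * delta w + 0 * delta w.
    rewrite /dL /epsA /dA /letter /delta.
    by case: z x0 => [] []; case: w => [|a [|b w]] /=; rewrite ?eqseq_cons /= ?andbF ?mul1r ?mul0r ?addr0.
  rewrite (ad'_linE _ _ _ H) ad'_delta /dA /letter /oneone; clear H.
  by case: z x0 => [] []; case: u => [|a [|b u]]; case: v => [|c v] /=;
     rewrite ?eqseq_cons /= ?andbF ?mul1r ?mul0r ?addr0.
elim=> [| | f g _ IHf _ IHg | c f _ IHf | f g Hf IHf Hg IHg] u v.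
- exact: (Hlet true u v).
- exact: (Hlet false u v).
- have Ha w : dL x0 (addA f g) w = 1 * dL x0 f w + 1 * dL x0 g w by rewrite !mul1r.
  rewrite (ad'_linE _ _ _ Ha) -IHf -IHg !mul1r.
  by [].
- have Ha w : dL x0 (scaleA c f) w = c * dL x0 f w + 0 * dL x0 f w by rewrite mul0r addr0.
  rewrite (ad'_linE _ _ _ Ha) -IHf mul0r addr0.
  by [].
- have dAb u' v' : dA x0 (bracket f g) u' v' = dA x0 (mulA f g) u' v' - dA x0 (mulA g f) u' v' by [].
  have Hd w : dL x0 (bracket f g) w = 1 * mulA f (dL x0 g) w + (-1) * mulA g (dL x0 f) w.
    rewrite [LHS]/dL /epsA dAb !dA_mul /Rm !mulA_nil (inL_eps Hf) (inL_eps Hg) /Lm /dL /epsA.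
    ring.
  have ef : ad' (dL x0 f) oneone = dA x0 f.
    by apply: functional_extensionality => u'; apply: functional_extensionality => v'; rewrite IHf.
  have eg : ad' (dL x0 g) oneone = dA x0 g.
    by apply: functional_extensionality => u'; apply: functional_extensionality => v'; rewrite IHg.
  rewrite (ad'_linE _ _ _ Hd) !ad'_mulE ef eg !ad'_Lie // dAb !dA_mul.
  ring.
Qed.
Lemma sum_tuple0 (F : seq bool -> R) : \sum_(t : 0.-tuple bool) F t = F [::].
Proof.
rewrite (big_pred1 [tuple]) // => t /=.
by symmetry; apply/eqP; exact: tuple0.
Qed.

Lemma sum_tupleS n (F : seq bool -> R) :
  \sum_(t : n.+1.-tuple bool) F t = \sum_(z : bool) \sum_(t : n.-tuple bool) F (z :: t).
Proof.
rewrite pair_big /=.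
rewrite (reindex (fun p : bool * n.-tuple bool => [tuple of p.1 :: p.2])) //=.
exists (fun t : n.+1.-tuple bool => (thead t, [tuple of behead t])).
  move=> [z t] _ /=; rewrite theadE; congr pair; exact: val_inj.
move=> t _ /=; apply: val_inj => /=.
by case: t => [[|a s] Hs].
Qed.

Lemma sum_sel (z0 : bool) (G : bool -> R) : \sum_(z : bool) (z0 == z)%:R * G z = G z0.
Proof. by rewrite big_bool; case: z0 => /=; rewrite ?mul1r ?mul0r ?addr0 ?add0r. Qed.

Lemma adA_nat a m u v : adA a m u v =
  \sum_(0 <= k < (size u + size v).+1) \sum_(t : k.-tuple bool) a t * adw t m u v.
Proof. by rewrite /adA big_mkord. Qed.

Lemma lpart n (a : A) m u v :
  \sum_(0 <= k < n) \sum_(z : bool) \sum_(t : k.-tuple bool) a (z :: t) * lmulT z (adw t m) u v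
  = if u is z0 :: u' then \sum_(0 <= k < n) \sum_(t : k.-tuple bool) a (z0 :: t) * adw t m u' v else 0.
Proof.
case: u => [|z0 u] /=.
  apply: big1 => k _; apply: big1 => z _; apply: big1 => t _; by rewrite /lmulT mulr0.
apply: eq_bigr => k _; rewrite /lmulT.
under eq_bigr => z _ do under eq_bigr => t _ do rewrite mulrCA.
under eq_bigr => z _ do rewrite -mulr_sumr.
by rewrite sum_sel.
Qed.

Lemma rpart n (a : A) m u v :
  \sum_(0 <= k < n) \sum_(z : bool) \sum_(t : k.-tuple bool) a (z :: t) * rmulT z (adw t m) u v
  = if rev v is z0 :: rv then \sum_(0 <= k < n) \sum_(t : k.-tuple bool) a (z0 :: t) * adw t m u (rev rv) else 0.
Proof.
rewrite /rmulT; case: (rev v) => [|z0 rv] /=.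
  apply: big1 => k _; apply: big1 => z _; apply: big1 => t _; by rewrite mulr0.
apply: eq_bigr => k _.
under eq_bigr => z _ do under eq_bigr => t _ do rewrite mulrCA.
under eq_bigr => z _ do rewrite -mulr_sumr.
by rewrite sum_sel.
Qed.

Lemma adA_ad'_aux m : forall n a u v, (size u + size v)%nat = n -> adA a m u v = ad' a m u v.
Proof.
elim=> [|n IH] a u v Hs.
  case: u v Hs => [|? ?] [|? ?] // _.
  rewrite adA_nat /= big_nat1 (sum_tuple0 (fun s => a s * adw s m [::] [::])).
  by rewrite ad'E /= subr0 addr0.
rewrite adA_nat Hs big_nat_recl //.
rewrite (sum_tuple0 (fun s => a s * adw s m u v)) /=.
under eq_bigr => k _ do rewrite (sum_tupleS _ (fun s => a s * adw s m u v)) /=.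
under eq_bigr => k _ do under eq_bigr => z _ do under eq_bigr => t _ do rewrite mulrBr.
under eq_bigr => k _ do under eq_bigr => z _ do rewrite sumrB.
under eq_bigr => k _ do rewrite sumrB.
rewrite sumrB lpart rpart ad'E.
congr (_ + (_ - _)).
- case: u Hs => [|z0 u] Hs //=.
  rewrite -IH; last by move: Hs; rewrite /= addSn => -[].
  rewrite adA_nat.
  have -> : (size u + size v)%nat = n by move: Hs; rewrite /= addSn => -[].
  by [].
- case/lastP: v Hs => [|v z1] Hs; rewrite ?rev_rcons ?revK //=.
  rewrite -IH; last by move: Hs; rewrite size_rcons addnS => -[].
  rewrite adA_nat.
  have -> : (size u + size v)%nat = n by move: Hs; rewrite size_rcons addnS => -[].
  by [].
Qed.

Lemma adA_ad' a m u v : adA a m u v = ad' a m u v.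
Proof. exact: (@adA_ad'_aux m _ a u v (erefl _)). Qed.

Theorem mainTheorem14 (x0 : bool) (l : A) :
  inL l -> dA x0 l = adA (dL x0 l) oneone.
Proof.
move=> Hl; apply: functional_extensionality => u; apply: functional_extensionality => v.
by rewrite adA_ad' (main_pw x0 Hl).
Qed.
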